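(* For every $k$ for which the quantities in the context are defined (i.e. $k\le k_{\max}$), $h(v^{(k)})=\min\{h(v): v\in n_0+\mathcal K_k(PAP,b_0),\ \|v\|=1\}$.
   Context: Let $A\in\mathbb{R}^{n\times n}$ be symmetric, $C\in\mathbb{R}^{n\times m}$ ($m<n$) full column rank, $b\in\mathbb{R}^m$, $n_0=C(C^{\top}C)^{-1}b$ with $\|n_0\|<1$, $\gamma=\sqrt{1-\|n_0\|^2}$, $P=I-C(C^{\top}C)^{-1}C^{\top}$ (orthogonal projector onto $\mathcal N(C^{\top})$), $b_0=PAn_0\neq0$, $h(v)=v^{\top}Av$. $\mathcal K_k(PAP,b_0)=\operatorname{span}\{b_0,PAPb_0,\dots,(PAP)^{k-1}b_0\}$. Lanczos process: with $M=PAP$, $q_0=0$, $\beta_1=\|b_0\|$, $q_1=b_0/\|b_0\|$, for $j=1,2,\dots$: $\alpha_j=q_j^{\top}Mq_j$, $\widehat q_{j+1}=Mq_j-\alpha_jq_j-\beta_jq_{j-1}$, $\beta_{j+1}=\|\widehat q_{j+1}\|$, and if $\beta_{j+1}>0$, $q_{j+1}=\widehat q_{j+1}/\beta_{j+1}$; $k_{\max}$ is the smallest $k$ with $\beta_{k+1}=0$. $Q_k=[q_1,\dots,q_k]$ has orthonormal columns spanning $\mathcal K_k(PAP,b_0)$ and $T_k=Q_k^{\top}PAPQ_k$ is tridiagonal. rLGopt: minimize $\lambda$ over $(\lambda,x)\in\mathbb{R}\times\mathbb{R}^k$ with $(T_k-\lambda I)x=-\|b_0\|e_1$ and $\|x\|=\gamma$;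 $(\mu^{(k)},x^{(k)})$ is its minimizer, and $v^{(k)}=n_0+Q_kx^{(k)}$. *)

(* Defs.v *)
From HB Require Import structures.
From mathcomp Require Import all_boot all_order all_algebra.
From mathcomp Require Import reals.
Set Implicit Arguments. Unset Strict Implicit. Unset Printing Implicit Defensive.
Import Order.TTheory GRing.Theory Num.Theory.
Local Open Scope ring_scope.

Section Lanczos.
Variable R : realType.

Definition vnorm (n : nat) (v : 'cV[R]_n) : R := Num.sqrt ((v^T *m v) 0 0).

Definition hq (n : nat) (A : 'M[R]_n) (v : 'cV[R]_n) : R := (v^T *m A *m v) 0 0.

Definition projP (n m : nat) (C : 'M[R]_(n, m)) : 'M[R]_n :=
  1%:M - C *m invmx (C^T *m C) *m C^T.

Definition nzero (n m : nat) (C : 'M[R]_(n, m)) (b : 'cV[R]_m) : 'cV[R]_n :=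
  C *m invmx (C^T *m C) *m b.

Definition krylov (n k : nat) (M : 'M[R]_n) (b0 : 'cV[R]_n) (v : 'cV[R]_n) : Prop :=
  exists c : 'I_k -> R, v = \sum_(i < k) c i *: (M ^+ i *m b0).

(* One Lanczos step: from (q_{j-1}, q_j, beta_j) to (q_j, q_{j+1}, beta_{j+1}).
   (When beta_{j+1} = 0 the new q is set to 0; it is never used below k_max.) *)
Definition lanczos_step (n : nat) (M : 'M[R]_n)
    (s : 'cV[R]_n * 'cV[R]_n * R) : 'cV[R]_n * 'cV[R]_n * R :=
  let: (qp, q, beta) := s in
  let alpha := (q^T *m M *m q) 0 0 in
  let qh := M *m q - alpha *: q - beta *: qp in
  let beta' := vnorm qh in
  (q, (if 0 < beta' then beta'^-1 *: qh else 0), beta').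

(* lanczos_state M b0 j = (q_j, q_{j+1}, beta_{j+1}), with q_0 = 0,
   q_1 = b0/||b0||, beta_1 = ||b0||. *)
Fixpoint lanczos_state (n : nat) (M : 'M[R]_n) (b0 : 'cV[R]_n) (j : nat)
    : 'cV[R]_n * 'cV[R]_n * R :=
  match j with
  | O => (0, (vnorm b0)^-1 *: b0, vnorm b0)
  | S j' => lanczos_step M (lanczos_state M b0 j')
  end.

(* q_(j+1) (0-based index j) *)
Definition lanczos_q (n : nat) (M : 'M[R]_n) (b0 : 'cV[R]_n) (j : nat) : 'cV[R]_n :=
  (lanczos_state M b0 j).1.2.

(* beta_(j+1) *)
Definition lanczos_beta (n : nat) (M : 'M[R]_n) (b0 : 'cV[R]_n) (j : nat) : R :=
  (lanczos_state M b0 j).2.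

(* k <= k_max, where k_max is the smallest k with beta_{k+1} = 0:
   beta_{j+1} <> 0 for all 1 <= j < k. *)
Definition le_kmax (n : nat) (M : 'M[R]_n) (b0 : 'cV[R]_n) (k : nat) : Prop :=
  forall j : nat, (1 <= j < k)%N -> lanczos_beta M b0 j != 0.

Definition lanczosQ (n k : nat) (M : 'M[R]_n) (b0 : 'cV[R]_n) : 'M[R]_(n, k) :=
  \matrix_(i < n, j < k) lanczos_q M b0 j i 0.

Definition lanczosT (n k : nat) (M : 'M[R]_n) (b0 : 'cV[R]_n) : 'M[R]_k :=
  (lanczosQ k M b0)^T *m M *m lanczosQ k M b0.

Definition e1 (k : nat) : 'cV[R]_k := \col_(i < k) (if val i == 0%N then 1 else 0).

Definition rLG_feasible (k : nat) (T : 'M[R]_k) (nb0 gamma : R)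
    (lam : R) (x : 'cV[R]_k) : Prop :=
  (T - lam%:M) *m x = - (nb0 *: e1 k) /\ vnorm x = gamma.

Definition rLG_minimizer (k : nat) (T : 'M[R]_k) (nb0 gamma : R)
    (mu : R) (x : 'cV[R]_k) : Prop :=
  rLG_feasible T nb0 gamma mu x /\
  forall (lam : R) (y : 'cV[R]_k), rLG_feasible T nb0 gamma lam y -> mu <= lam.

Definition is_min_on (n : nat) (S : 'cV[R]_n -> Prop) (f : 'cV[R]_n -> R)
    (w : 'cV[R]_n) : Prop :=
  S w /\ forall v, S v -> f w <= f v.

End Lanczos.

(* Main.v *)
Require Import Defs.
From HB Require Import structures.
From mathcomp Require Import all_boot all_order all_algebra.
From mathcomp Require Import all_classical all_reals all_analysis.
From mathcomp Require Import ring lra zify.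
Set Implicit Arguments. Unset Strict Implicit. Unset Printing Implicit Defensive.
Import Order.TTheory GRing.Theory Num.Theory.
Import numFieldNormedType.Exports.
Local Open Scope classical_set_scope.
Local Open Scope ring_scope.
Section Dot.
Variable R : realType.

Definition dotv n (u v : 'cV[R]_n) : R := (u^T *m v) 0 0.

Lemma dotvE n (u v : 'cV[R]_n) : dotv u v = \sum_i u i 0 * v i 0.
Proof. by rewrite /dotv mxE; apply: eq_bigr => i _; rewrite mxE. Qed.

Lemma dotvC n (u v : 'cV[R]_n) : dotv u v = dotv v u.
Proof. by rewrite !dotvE; apply: eq_bigr => i _; rewrite mulrC. Qed.

Lemma dotvDl n (u v w : 'cV[R]_n) : dotv (u + v) w = dotv u w + dotv v w.
Proof. by rewrite !dotvE -big_split; apply: eq_bigr => i _; rewrite mxE mulrDl. Qed.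

Lemma dotvDr n (u v w : 'cV[R]_n) : dotv w (u + v) = dotv w u + dotv w v.
Proof. by rewrite dotvC dotvDl !(dotvC w). Qed.

Lemma dotvZl n a (u w : 'cV[R]_n) : dotv (a *: u) w = a * dotv u w.
Proof. by rewrite !dotvE mulr_sumr; apply: eq_bigr => i _; rewrite mxE mulrA. Qed.

Lemma dotvZr n a (u w : 'cV[R]_n) : dotv w (a *: u) = a * dotv w u.
Proof. by rewrite dotvC dotvZl dotvC. Qed.

Lemma dotvNl n (u w : 'cV[R]_n) : dotv (- u) w = - dotv u w.
Proof. by rewrite -scaleN1r dotvZl mulN1r. Qed.

Lemma dotvNr n (u w : 'cV[R]_n) : dotv w (- u) = - dotv w u.
Proof. by rewrite -scaleN1r dotvZr mulN1r. Qed.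

Lemma dotvBl n (u v w : 'cV[R]_n) : dotv (u - v) w = dotv u w - dotv v w.
Proof. by rewrite dotvDl dotvNl. Qed.

Lemma dotvBr n (u v w : 'cV[R]_n) : dotv w (u - v) = dotv w u - dotv w v.
Proof. by rewrite dotvDr dotvNr. Qed.

Lemma dotv0l n (w : 'cV[R]_n) : dotv 0 w = 0.
Proof. by rewrite -(scale0r (0 : 'cV[R]_n)) dotvZl mul0r. Qed.

Lemma dotv0r n (w : 'cV[R]_n) : dotv w 0 = 0.
Proof. by rewrite dotvC dotv0l. Qed.

Lemma dotv_ge0 n (u : 'cV[R]_n) : 0 <= dotv u u.
Proof. by rewrite dotvE; apply: sumr_ge0 => i _; rewrite -expr2 sqr_ge0. Qed.

Lemma dotv_eq0 n (u : 'cV[R]_n) : dotv u u = 0 -> u = 0.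
Proof.
rewrite dotvE => /eqP; rewrite psumr_eq0 => [/allP h|i _]; last by rewrite -expr2 sqr_ge0.
apply/matrixP => i j; rewrite ord1 mxE.
by have := h i (mem_index_enum _); rewrite -expr2 sqrf_eq0 => /eqP.
Qed.

Lemma dotv_sym n (M : 'M[R]_n) (u v : 'cV[R]_n) : M^T = M ->
  dotv u (M *m v) = dotv (M *m u) v.
Proof. by move=> hM; rewrite /dotv trmx_mul hM mulmxA. Qed.

Lemma dotv_mulT n k (Q : 'M[R]_(n, k)) (u : 'cV[R]_k) (v : 'cV[R]_n) :
  dotv (Q *m u) v = dotv u (Q^T *m v).
Proof. by rewrite /dotv trmx_mul mulmxA. Qed.

End Dot.
Lemma poly4 (R : realType) (c1 c2 c3 c4 : R) :
  (forall t, 0 <= c1 * t + c2 * t ^+ 2 + c3 * t ^+ 3 + c4 * t ^+ 4) -> c1 <= 0.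
Proof.
move=> h; rewrite leNgt; apply/negP => c1p.
pose K : R := `|c2| + `|c3| + `|c4| + 1.
have Kp : 0 < K by rewrite /K; have := normr_ge0 c2; have := normr_ge0 c3; have := normr_ge0 c4; lra.
pose e : R := c1 / (c1 + K).
have cK : 0 < c1 + K by lra.
have e0 : 0 < e by rewrite /e divr_gt0.
have e1 : e <= 1 by rewrite /e ler_pdivrMr // mul1r; lra.
have eK : e * K < c1.
  by rewrite /e mulrAC ltr_pdivrMr // ltr_pM2l // ltrDr.
have := h (- e).
have e2 : 0 < e ^+ 2 by rewrite exprn_gt0.
have h3 : e ^+ 3 <= e ^+ 2 by rewrite exprS -[leRHS]mul1r ler_wpM2r // ltW.
have h4 : e ^+ 4 <= e ^+ 2.
  apply: le_trans h3; rewrite exprS -[leRHS]mul1r ler_wpM2r // exprn_ge0 // ltW //.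
have e3 : 0 <= e ^+ 3 by rewrite exprn_ge0 // ltW.
have i2 : c2 * e ^+ 2 <= `|c2| * e ^+ 2 by apply: ler_wpM2r; [exact: ltW | exact: ler_norm].
have i3 : - c3 * e ^+ 3 <= `|c3| * e ^+ 2.
  apply: le_trans (_ : `|c3| * e ^+ 3 <= _); first by apply: ler_wpM2r => //; rewrite -normrN; exact: ler_norm.
  by rewrite ler_wpM2l.
have i4 : c4 * e ^+ 4 <= `|c4| * e ^+ 2.
  apply: le_trans (_ : `|c4| * e ^+ 4 <= _); first by apply: ler_wpM2r; [rewrite exprn_ge0 // ltW | exact: ler_norm].
  by rewrite ler_wpM2l.
have -> : (- e) ^+ 2 = e ^+ 2 by rewrite sqrrN.
have -> : (- e) ^+ 3 = - e ^+ 3 by rewrite exprNn -signr_odd /= expr1 mulN1r.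
have -> : (- e) ^+ 4 = e ^+ 4 by rewrite exprNn -signr_odd /= expr0 mul1r.
have ee : e ^+ 2 = e * e by rewrite expr2.
rewrite /K in eK.
nra.
Qed.
Section TRS.
Variable R : realType.
Variable k : nat.
Variables (T : 'M[R]_k) (g : 'cV[R]_k).
Hypothesis hT : T^T = T.

Definition qf (y : 'cV[R]_k) := dotv y (T *m y) + 2 * dotv g y.

Lemma qf_diff (lam : R) (y z r : 'cV[R]_k) :
  g = r - (T *m y - lam *: y) -> dotv z z = dotv y y ->
  qf z - qf y = dotv (z - y) (T *m (z - y)) - lam * dotv (z - y) (z - y)
                + 2 * dotv r (z - y).
Proof.
move=> hg hzy; rewrite /qf hg.
have s1 : dotv y (T *m z) = dotv z (T *m y) by rewrite dotv_sym // dotvC.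
have s2 : dotv (T *m y) z = dotv z (T *m y) by rewrite dotvC.
have s3 : dotv (T *m y) y = dotv y (T *m y) by rewrite dotvC.
have s4 : dotv y z = dotv z y by rewrite dotvC.
rewrite !(mulmxBr, dotvBl, dotvBr, dotvDl, dotvDr, dotvNl, dotvNr, dotvZl, dotvZr).
rewrite ?s1 ?s2 ?s3 ?s4 ?hzy.
lra.
Qed.

End TRS.
Lemma cont_sum (R : realType) (T : topologicalType) k (F : 'I_k -> T -> R) :
  (forall i, continuous (F i)) -> continuous (fun x => \sum_(i < k) F i x).
Proof.
move=> hF; apply: continuous_big; first exact: add_continuous.
by move=> i _; exact: hF.
Qed.

Lemma cont_mul (R : realType) (T : topologicalType) (f g : T -> R) :
  continuous f -> continuous g -> continuous (fun x => f x * g x).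
Proof. by move=> hf hg x; exact: (continuousM (hf x) (hg x)). Qed.

Lemma cont_quad (R : realType) k (B : 'M[R]_k) (c : 'cV[R]_k) :
  continuous (fun r : 'rV[R]_k => (r *m B *m r^T) 0 0 + (r *m c) 0 0).
Proof.
rewrite (_ : (fun r : 'rV[R]_k => _) = (fun r => \sum_(j < k) ((\sum_(i < k) r 0 i * B i j) * r 0 j) + \sum_(i < k) r 0 i * c i 0)); last first.
  apply: funext => r; rewrite !mxE; congr (_ + _); apply: eq_bigr => j _; rewrite !mxE.
  by congr (_ * _); apply: eq_bigr => i _; rewrite mxE.
move=> r; apply: continuousD; [move: r|move: r].
  apply: cont_sum => j; apply: cont_mul; last exact: coord_continuous.
  apply: cont_sum => i; apply: cont_mul; first exact: coord_continuous.
  exact: cst_continuous.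
apply: cont_sum => i; apply: cont_mul; first exact: coord_continuous.
exact: cst_continuous.
Qed.

Lemma entry_le_sum (R : realType) k (r : 'rV[R]_k) j :
  r 0 j ^+ 2 <= (r *m r^T) 0 0.
Proof.
rewrite mxE (bigD1 j) //= !mxE -expr2 lerDl.
by apply: sumr_ge0 => i _; rewrite !mxE -expr2 sqr_ge0.
Qed.

Lemma sphere_compact (R : realType) k (c : R) :
  compact [set r : 'rV[R]_k | (r *m r^T) 0 0 = c].
Proof.
apply: bounded_closed_compact.
  rewrite /= /bounded_near /globally /=.
  near=> M => r /= Hr.
  rewrite [leLHS]/Num.norm /= mx_normrE; apply: bigmax_le => [|[i j] _] /=.
    near: M; apply: nbhs_pinfty_ge; exact: num_real.
  rewrite ord1.
  have h1 := @entry_le_sum _ _ r j; rewrite Hr in h1.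
  have h2 : `|r 0 j| <= 1 + `|c|.
    have : `|r 0 j| ^+ 2 <= `|c| by rewrite real_normK ?num_real //; apply: le_trans h1 (ler_norm _).
    have := normr_ge0 (r 0 j); nra.
  apply: le_trans h2 _.
  near: M; apply: nbhs_pinfty_ge; exact: num_real.
have -> : [set r : 'rV[R]_k | (r *m r^T) 0 0 = c] = (fun r : 'rV[R]_k => (r *m 1%:M *m r^T) 0 0 + (r *m (0 : 'cV[R]_k)) 0 0) @^-1` [set x | x = c].
  apply: funext => r /=; rewrite mulmx1 mulmx0 [X in _ + X]mxE addr0 //.
apply: preimage_closed; last exact: closed_eq.
move=> x _; exact: cont_quad.
Unshelve. all: by end_near.
Qed.
Section TRS2.
Variable R : realType.
Variable k : nat.
Variables (T : 'M[R]_k) (g : 'cV[R]_k).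
Hypothesis hT : T^T = T.

Lemma qf_min_exists (c : R) (z : 'cV[R]_k) : dotv z z = c ->
  exists2 ys : 'cV[R]_k, dotv ys ys = c &
    forall w, dotv w w = c -> qf T g ys <= qf T g w.
Proof.
move=> hz.
pose A := [set r : 'rV[R]_k | (r *m r^T) 0 0 = c].
have h1 : A !=set0.
  exists z^T; rewrite /A /= -hz /dotv. rewrite (@trmxK _ k 1 z). done.
have h2 : compact A by exact: sphere_compact.
have h3 : {within A, continuous (fun r : 'rV[R]_k => qf T g r^T)}.
  apply: continuous_subspaceT.
  have -> : (fun r : 'rV[R]_k => qf T g r^T) =
     (fun r => (r *m T *m r^T) 0 0 + (r *m (2 *: g)) 0 0).
    apply: funext => r; rewrite /qf /dotv trmxK mulmxA; congr (_ + _).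
    rewrite -scalemxAr [in RHS]mxE; congr (_ * _).
    by rewrite -trmx_mul mxE.
  exact: cont_quad.
have [cc cA cmin] := EVT_min_rV h1 h2 h3.
exists cc^T.
  by move: cA; rewrite inE /= /dotv (@trmxK _ 1 k cc).
move=> w hw; have := cmin w^T; rewrite (@trmxK _ k 1 w); apply.
by rewrite inE /A /= -hw /dotv (@trmxK _ k 1 w).
Qed.

End TRS2.
Section TRS3.
Variable R : realType.
Variable k : nat.
Variables (T : 'M[R]_k) (g : 'cV[R]_k).
Hypothesis hT : T^T = T.

Lemma first_order (gam : R) (ys : 'cV[R]_k) : 0 < gam ->
  dotv ys ys = gam ^+ 2 ->
  (forall w, dotv w w = gam ^+ 2 -> qf T g ys <= qf T g w) ->
  let lam := (dotv ys (T *m ys) + dotv g ys) / gam ^+ 2 in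
  T *m ys - lam *: ys = - g.
Proof.
move=> gp nys ysmin lam.
pose r := g + (T *m ys - lam *: ys).
have g2 : gam ^+ 2 != 0 by rewrite expf_neq0 // gt_eqF.
have hg : g = r - (T *m ys - lam *: ys) by rewrite /r addrK.
have rys : dotv r ys = 0.
  rewrite /r !(dotvDl, dotvBl, dotvNl, dotvZl) nys (dotvC (T *m ys)) /lam (dotvC g).
  rewrite divfK //; lra.
have ysr : dotv ys r = 0 by rewrite dotvC.
suff r0 : r = 0.
  by apply/eqP; rewrite -addr_eq0 addrC -/r r0.
clearbody r.
apply: dotv_eq0; apply/eqP; rewrite eq_le dotv_ge0 andbT.
pose Rr := dotv r r.
pose a := dotv ys (T *m ys) - lam * gam ^+ 2.
pose b := dotv ys (T *m r).
pose c := dotv r (T *m r) - lam * Rr.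
have gp4 : 0 < gam ^+ 4 by rewrite exprn_gt0.
suff : gam ^+ 4 * Rr <= 0 by rewrite pmulr_rle0.
apply: (@poly4 _ _ (gam ^+ 4 * c) (gam ^+ 2 * Rr ^+ 2 - 2 * Rr * gam ^+ 2 * b) (Rr ^+ 2 * a)) => t.
have Rr0 : 0 <= Rr := dotv_ge0 r.
pose D := gam ^+ 2 + t ^+ 2 * Rr.
have Dp : 0 < D.
  rewrite /D; have := mulr_ge0 (sqr_ge0 t) Rr0; have := exprn_gt0 2 gp; lra.
pose al := (gam ^+ 2 - t ^+ 2 * Rr) / D.
pose be := 2 * t * gam ^+ 2 / D.
pose zt := al *: ys + be *: r.
have nzt : dotv zt zt = gam ^+ 2.
  rewrite /zt !(dotvDl, dotvDr, dotvZl, dotvZr) nys rys ysr -/Rr /al /be.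
  rewrite /D; field; exact: lt0r_neq0.
have := ysmin zt nzt; rewrite -subr_ge0 (qf_diff hT hg) ?nys //.
have -> : zt - ys = (al - 1) *: ys + be *: r by rewrite /zt scalerBl scale1r addrAC.
rewrite !(mulmxDr, dotvDl, dotvDr, dotvZl, dotvZr, mulmxBr) -!scalemxAr.
rewrite !(dotvZl, dotvZr) nys rys ysr -/Rr.
have s1 : dotv r (T *m ys) = b by rewrite /b dotv_sym // dotvC.
rewrite s1.
move=> H.
have -> : gam ^+ 4 * Rr * t + gam ^+ 4 * c * t ^+ 2 +
   (gam ^+ 2 * Rr ^+ 2 - 2 * Rr * gam ^+ 2 * b) * t ^+ 3 + Rr ^+ 2 * a * t ^+ 4
  = (D ^+ 2 / 4) * ((al - 1) * ((al - 1) * dotv ys (T *m ys) + be * b) +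
       be * ((al - 1) * b + be * dotv r (T *m r)) -
       lam * ((al - 1) * ((al - 1) * gam ^+ 2 + be * 0) + be * ((al - 1) * 0 + be * Rr)) +
       2 * ((al - 1) * 0 + be * Rr)).
  rewrite /al /be /c /a /D; field; exact: lt0r_neq0.
apply: mulr_ge0 => //; apply: divr_ge0 => //; exact: sqr_ge0.
Qed.

End TRS3.
Section TRS4.
Variable R : realType.
Variable k : nat.
Variables (T : 'M[R]_k) (g : 'cV[R]_k).
Hypothesis hT : T^T = T.

Lemma trs (gam mu : R) (x : 'cV[R]_k) : 0 < gam ->
  T *m x - mu *: x = - g -> dotv x x = gam ^+ 2 ->
  (forall lam y, T *m y - lam *: y = - g -> dotv y y = gam ^+ 2 -> mu <= lam) ->
  forall z, dotv z z = gam ^+ 2 -> qf T g x <= qf T g z.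
Proof.
move=> gp hx nx hmin z nz.
have [ys nys ysmin] := qf_min_exists T g nz.
have hys := first_order hT gp nys ysmin.
move: hys; set lam := (_ / _) => hys.
have mul := hmin _ _ hys nys.
apply: le_trans (ysmin z nz).
have hg1 : g = 0 - (T *m x - mu *: x) by rewrite hx sub0r opprK.
have hg2 : g = 0 - (T *m ys - lam *: ys) by rewrite hys sub0r opprK.
have e1 := qf_diff hT hg1 (etrans nys (esym nx)).
have e2 := qf_diff hT hg2 (etrans nx (esym nys)).
move: e1 e2; rewrite !dotv0l !mulr0 !addr0.
have -> : ys - x = - (x - ys) by rewrite opprB.
rewrite mulmxN !(dotvNl, dotvNr) opprK.
have := dotv_ge0 (x - ys).
have : 0 <= lam - mu by rewrite subr_ge0.
move=> h1 h2; have := mulr_ge0 h1 h2.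
lra.
Qed.
End TRS4.

Section Proj.
Variable R : realType.

Lemma WWT0 p q (W : 'M[R]_(p, q)) : W *m W^T = 0 -> W = 0.
Proof.
move=> h; apply/matrixP => i j; rewrite mxE.
have := congr1 (fun M : 'M[R]_p => M i i) h; rewrite !mxE => /eqP.
rewrite psumr_eq0 => [/allP hh|l _]; last by rewrite mxE -expr2 sqr_ge0.
by have := hh j (mem_index_enum _); rewrite mxE -expr2 sqrf_eq0 => /eqP.
Qed.

Lemma CtC_unit n m (C : 'M[R]_(n, m)) : \rank C = m -> C^T *m C \in unitmx.
Proof.
move=> hC; rewrite -row_free_unit -kermx_eq0.
have hU := mulmx_ker (C^T *m C).
have h1 : kermx (C^T *m C) *m C^T = 0.
  apply: WWT0; rewrite trmx_mul trmxK mulmxA -(mulmxA _ C^T) hU mul0mx //.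
have fr : row_free C^T by rewrite /row_free mxrank_tr hC.
by rewrite -(mulmx_free_eq0 _ fr) h1.
Qed.

Variables (n m : nat) (C : 'M[R]_(n, m)) (b : 'cV[R]_m).
Hypothesis hC : \rank C = m.

Let G := C^T *m C.
Let Gu : G \in unitmx := CtC_unit hC.

Lemma projP_sym : (projP C)^T = projP C.
Proof.
rewrite /projP linearB /= trmx1; congr (_ - _).
rewrite !(@trmx_mul R) (@trmxK R) trmx_inv.
rewrite (_ : (C^T *m C)^T = C^T *m C); first exact: mulmxA.
by rewrite (@trmx_mul R) (@trmxK R).
Qed.

Lemma projP_C : projP C *m C = 0.
Proof.
rewrite /projP mulmxBl mul1mx -!mulmxA -/G mulVmx // mulmx1 subrr //.
Qed.

Lemma projP_CT : C^T *m projP C = 0.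
Proof. by rewrite -{1}projP_sym -(@trmx_mul R) projP_C trmx0. Qed.

Lemma projP_idem : projP C *m projP C = projP C.
Proof.
rewrite {1}/projP mulmxBl mul1mx -!(@mulmxA R) projP_CT !mulmx0 subr0 //.
Qed.

Lemma projP_n0 : projP C *m nzero C b = 0.
Proof. by rewrite /nzero !mulmxA projP_C !mul0mx. Qed.

End Proj.
Section Lz.
Variables (R : realType) (n : nat) (M : 'M[R]_n) (b0 : 'cV[R]_n).
Hypothesis hM : M^T = M.
Hypothesis hb0 : b0 != 0.
Variable k : nat.
Hypothesis hk : le_kmax M b0 k.

Definition qq (j : nat) : 'cV[R]_n := if j is j'.+1 then lanczos_q M b0 j' else 0.
Definition bet (j : nat) : R := lanczos_beta M b0 j.
Definition alp (j : nat) : R := ((qq j)^T *m M *m qq j) 0 0.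
Definition qh (j : nat) : 'cV[R]_n := M *m qq j - alp j *: qq j - bet j.-1 *: qq j.-1.

Lemma qp_eq j : (lanczos_state M b0 j).1.1 = qq j.
Proof.
case: j => [//|j] /=; rewrite /lanczos_q.
by case: (lanczos_state M b0 j) => [[a b'] c].
Qed.

Lemma triple j : lanczos_state M b0 j = (qq j, qq j.+1, bet j).
Proof.
rewrite /bet /lanczos_beta -qp_eq /= /lanczos_q.
by case: (lanczos_state M b0 j) => [[a b'] c].
Qed.

Lemma bet_succ j : bet j.+1 = vnorm (qh j.+1).
Proof. by rewrite /bet /lanczos_beta /= triple /=. Qed.

Lemma qq_succ j : qq j.+2 = if 0 < bet j.+1 then (bet j.+1)^-1 *: qh j.+1 else 0.
Proof. by rewrite bet_succ /= /lanczos_q /= triple. Qed.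

Lemma qq1 : qq 1 = (vnorm b0)^-1 *: b0.
Proof. by []. Qed.

Lemma bet0 : bet 0 = vnorm b0.
Proof. by []. Qed.

Lemma vnorm_dot m (v : 'cV[R]_m) : vnorm v = Num.sqrt (dotv v v).
Proof. by []. Qed.

Lemma vnorm_ge0 m (v : 'cV[R]_m) : 0 <= vnorm v.
Proof. exact: sqrtr_ge0. Qed.

Lemma vnorm_sq m (v : 'cV[R]_m) : vnorm v ^+ 2 = dotv v v.
Proof. by rewrite vnorm_dot sqr_sqrtr // dotv_ge0. Qed.

Lemma vnorm_gt0 m (v : 'cV[R]_m) : v != 0 -> 0 < vnorm v.
Proof.
move=> hv; rewrite lt_def vnorm_ge0 andbT; apply/eqP => h0.
move/eqP: hv; apply; apply: dotv_eq0; by rewrite -vnorm_sq h0 expr0n.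
Qed.

Lemma bet_pos i : (1 <= i < k)%N -> 0 < bet i.
Proof.
move=> hi; have := hk hi; rewrite -/(bet i).
case: i hi => [//|i] _ hne; rewrite lt_def hne /= bet_succ; exact: vnorm_ge0.
Qed.

Lemma rec i : (1 <= i < k)%N ->
  M *m qq i = bet i *: qq i.+1 + alp i *: qq i + bet i.-1 *: qq i.-1.
Proof.
move=> hi; have bp := bet_pos hi.
case: i hi bp => [//|i] hi bp.
rewrite qq_succ bp scalerA mulfV ?gt_eqF // scale1r /qh.
by rewrite /qh /= addrAC !subrK.
Qed.

Lemma qq_norm i : (1 <= i <= k)%N -> dotv (qq i) (qq i) = 1.
Proof.
case: i => [//|[|i]] hi.
  have bp := vnorm_gt0 hb0.
  rewrite qq1 dotvZl dotvZr -vnorm_sq mulrA -expr2 -exprMn mulVf ?gt_eqF //.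
  by rewrite expr1n.
have hi' : (1 <= i.+1 < k)%N by [].
have bp := bet_pos hi'.
rewrite qq_succ bp dotvZl dotvZr mulrA -expr2.
rewrite [X in _ * X = _](_ : dotv _ _ = bet i.+1 ^+ 2); last by rewrite bet_succ vnorm_sq.
by rewrite -exprMn mulVf ?gt_eqF // expr1n.
Qed.

End Lz.
Section Lz2.
Variables (R : realType) (n : nat) (M : 'M[R]_n) (b0 : 'cV[R]_n).
Hypothesis hM : M^T = M.
Hypothesis hb0 : b0 != 0.
Variable k : nat.
Hypothesis hk : le_kmax M b0 k.

Definition delta (i j : nat) : R := ((i == j) && (0 < i)%N)%:R.

Local Notation qq := (qq M b0).
Local Notation bet := (bet M b0).
Local Notation alp := (alp M b0).

Lemma ortho N : (N <= k)%N -> forall i j, (i <= N)%N -> (j <= N)%N ->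
  dotv (qq i) (qq j) = delta i j.
Proof.
elim: N => [_ i j|N IH hN i j hi hj].
  by rewrite leqn0 => /eqP -> _; rewrite dotv0l /delta andbF.
have IH' := IH (ltnW hN).
have key : forall i, (i <= N)%N -> dotv (qq i) (qq N.+1) = 0.
  move=> i0 hi0; case: i0 hi0 => [|i0] hi0; first by rewrite dotv0l.
  case: N IH IH' hN hi hj hi0 => [//|N] IH IH' hN hi hj hi0.
  have hN' : (1 <= N.+1 < k)%N by [].
  have bp := bet_pos hk hN'.
  have E : bet N.+1 *: qq N.+2 = M *m qq N.+1 - alp N.+1 *: qq N.+1 - bet N *: qq N.
    by rewrite qq_succ bp scalerA mulfV ?gt_eqF // scale1r.
  suff : bet N.+1 * dotv (qq i0.+1) (qq N.+2) = 0.
    by move/eqP; rewrite mulf_eq0 gt_eqF //= => /eqP.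
  rewrite -dotvZr E !(dotvBr, dotvZr).
  case: (ltngtP i0.+1 N.+1) => [hlt|hgt|heq].
  - rewrite (dotv_sym _ _ hM) (rec hk) ?(hlt, ltn_trans hlt) //.
    rewrite !(dotvDl, dotvZl) !IH' //; last by apply: ltnW.
    rewrite /delta (ltn_eqF hlt) (ltn_eqF (ltnW hlt)) eqSS !andbT /=.
    case: eqP => [<-|_] /=; lra.
  - by rewrite ltnNge hi0 in hgt.
  - case: heq => ->.
    rewrite IH' // IH' // /delta eqxx /= (gtn_eqF (ltnSn N)) /=.
    rewrite /alp /dotv mulmxA; lra.
case: (ltngtP i N.+1) hi => [hlt|//|->] _.
  case: (ltngtP j N.+1) hj => [hlt2|//|->] _.
    exact: IH'.
  by rewrite key // /delta (ltn_eqF hlt).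
case: (ltngtP j N.+1) hj => [hlt2|//|->] _.
  by rewrite dotvC key // /delta (gtn_eqF hlt2).
by rewrite (qq_norm hb0 hk) // /delta eqxx.
Qed.

End Lz2.
Section Lz3.
Variables (R : realType) (n : nat) (M : 'M[R]_n) (b0 : 'cV[R]_n).
Hypothesis hM : M^T = M.
Hypothesis hb0 : b0 != 0.
Variable k : nat.
Hypothesis hk : le_kmax M b0 k.

Local Notation qq := (qq M b0).
Local Notation bet := (bet M b0).
Local Notation alp := (alp M b0).

Definition inK (i : nat) (v : 'cV[R]_n) :=
  exists c : nat -> R, v = \sum_(l < i) c l *: (M ^+ l *m b0).

Lemma inK0 i : inK i 0.
Proof. by exists (fun _ => 0); rewrite big1 // => l _; rewrite scale0r. Qed.

Lemma inKD i u v : inK i u -> inK i v -> inK i (u + v).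
Proof.
move=> [c ->] [d ->]; exists (fun l => c l + d l).
by rewrite -big_split; apply: eq_bigr => l _; rewrite scalerDl.
Qed.

Lemma inKZ i a v : inK i v -> inK i (a *: v).
Proof.
move=> [c ->]; exists (fun l => a * c l).
by rewrite scaler_sumr; apply: eq_bigr => l _; rewrite scalerA.
Qed.

Lemma inKB i u v : inK i u -> inK i v -> inK i (u - v).
Proof. by move=> hu hv; apply: inKD => //; rewrite -scaleN1r; exact: inKZ. Qed.

Lemma inK_S i v : inK i v -> inK i.+1 v.
Proof.
move=> [c ->]; exists (fun l => if (l < i)%N then c l else 0).
rewrite big_ord_recr /= ltnn scale0r addr0.
by apply: eq_bigr => l _; rewrite ltn_ord.
Qed.

Lemma inK_M i v : inK i v -> inK i.+1 (M *m v).
Proof.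
move=> [c ->]; exists (fun l => if l is l'.+1 then c l' else 0).
rewrite big_ord_recl /= scale0r add0r mulmx_sumr.
apply: eq_bigr => l _; rewrite -scalemxAr mulmxA exprS mulmxE //.
Qed.

Lemma inK_b0 : inK 1 b0.
Proof.
exists (fun _ => 1); rewrite big_ord1 scale1r expr0.
by rewrite mul1mx.
Qed.

Lemma qq_inK_aux i : (i.+1 <= k)%N -> inK i.+1 (qq i.+1) /\ inK i (qq i).
Proof.
elim: i => [_|i IH hi].
  split; last exact: inK0.
  by rewrite qq1; apply: inKZ; exact: inK_b0.
have [h1 h2] := IH (ltnW hi).
split => //.
have hi' : (1 <= i.+1 < k)%N by [].
rewrite qq_succ (bet_pos hk hi'); apply: inKZ.
rewrite /qh /=.
apply: inKB; first apply: inKB.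
- exact: inK_M.
- by apply: inKZ; exact: inK_S.
- by apply: inKZ; do 2 apply: inK_S.
Qed.

Lemma qq_inK i : (i <= k)%N -> inK i (qq i).
Proof.
case: i => [_|i hi]; first exact: inK0.
by case: (qq_inK_aux hi).
Qed.

Lemma inK_le i j v : (i <= j)%N -> inK i v -> inK j v.
Proof.
move=> /subnK <-; elim: (j - i)%N => [//|d IH] hv.
by rewrite addSn; apply: inK_S; exact: IH.
Qed.

Lemma inK_P (P : 'M[R]_n) i v : P *m M = M -> P *m b0 = b0 -> inK i v -> P *m v = v.
Proof.
move=> hPM hPb [c ->]; rewrite mulmx_sumr; apply: eq_bigr => l _.
rewrite -scalemxAr; congr (_ *: _).
case: l => [[|l] hl] /=.
  by rewrite expr0 mul1mx.
by rewrite exprS -mulmxE !mulmxA hPM.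
Qed.

Lemma inK_krylov v : inK k v -> krylov k M b0 v.
Proof. by move=> [c ->]; exists (fun o => c o). Qed.

Lemma krylov_inK v : krylov k M b0 v -> inK k v.
Proof.
move=> [c ->]; exists (fun l => if insub l is Some o then c o else 0).
by apply: eq_bigr => o _; rewrite valK.
Qed.

Definition inQ (i : nat) (v : 'cV[R]_n) :=
  exists y : nat -> R, v = \sum_(l < i) y l *: qq l.+1.

Lemma inQ0 i : inQ i 0.
Proof. by exists (fun _ => 0); rewrite big1 // => l _; rewrite scale0r. Qed.

Lemma inQD i u v : inQ i u -> inQ i v -> inQ i (u + v).
Proof.
move=> [c ->] [d ->]; exists (fun l => c l + d l).
by rewrite -big_split; apply: eq_bigr => l _; rewrite scalerDl.
Qed.

Lemma inQZ i a v : inQ i v -> inQ i (a *: v).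
Proof.
move=> [c ->]; exists (fun l => a * c l).
by rewrite scaler_sumr; apply: eq_bigr => l _; rewrite scalerA.
Qed.

Lemma inQ_S i v : inQ i v -> inQ i.+1 v.
Proof.
move=> [c ->]; exists (fun l => if (l < i)%N then c l else 0).
rewrite big_ord_recr /= ltnn scale0r addr0.
by apply: eq_bigr => l _; rewrite ltn_ord.
Qed.

Lemma inQ_le i j v : (i <= j)%N -> inQ i v -> inQ j v.
Proof.
move=> /subnK <-; elim: (j - i)%N => [//|d IH] hv.
by rewrite addSn; apply: inQ_S; exact: IH.
Qed.

Lemma inQ_sum i m (F : 'I_m -> 'cV[R]_n) : (forall l, inQ i (F l)) -> inQ i (\sum_(l < m) F l).
Proof.
move=> hF; elim/big_ind: _ => //; [exact: inQ0 | exact: inQD].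
Qed.

Lemma inQ_qq i j : (j <= i)%N -> inQ i (qq j).
Proof.
case: j => [_|j hj]; first exact: inQ0.
exists (fun l => if l == j then 1 else 0).
rewrite (bigD1 (Ordinal hj)) //= eqxx scale1r big1 ?addr0 // => l hl.
by move: hl; rewrite -val_eqE /= => /negbTE ->; rewrite scale0r.
Qed.

Lemma inQ_M i v : (i < k)%N -> inQ i v -> inQ i.+1 (M *m v).
Proof.
move=> hi [y ->]; rewrite mulmx_sumr; apply: inQ_sum => l.
rewrite -scalemxAr; apply: inQZ.
have hl : (1 <= l.+1 < k)%N by apply: leq_ltn_trans (ltn_ord l) hi.
rewrite (rec hk hl); apply: inQD; first apply: inQD.
- apply: inQZ; apply: inQ_qq; have := ltn_ord l; lia.
- apply: inQZ; apply: inQ_qq; have := ltn_ord l; lia.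
- apply: inQZ; apply: inQ_qq; have := ltn_ord l; lia.
Qed.

Lemma pow_inQ l : (l < k)%N -> inQ l.+1 (M ^+ l *m b0).
Proof.
elim: l => [hk0|l IH hl].
  rewrite expr0 mul1mx.
  have bp := vnorm_gt0 hb0.
  rewrite (_ : b0 = vnorm b0 *: qq 1); first by apply: inQZ; exact: inQ_qq.
  by rewrite qq1 scalerA mulfV ?gt_eqF // scale1r.
rewrite exprS -mulmxE -mulmxA; apply: inQ_M => //.
exact: IH (ltnW hl).
Qed.

Lemma krylov_inQ v : krylov k M b0 v -> inQ k v.
Proof.
move=> [c ->]; apply: inQ_sum => l; apply: inQZ.
by apply: (inQ_le (ltn_ord l)); apply: pow_inQ.
Qed.

Lemma Q_mul y : lanczosQ k M b0 *m y = \sum_(j < k) y j 0 *: qq j.+1.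
Proof.
apply/matrixP => a z; rewrite ord1 !mxE summxE; apply: eq_bigr => j _.
by rewrite !mxE mulrC.
Qed.

Lemma QT_mul w (j : 'I_k) : ((lanczosQ k M b0)^T *m w) j 0 = dotv (qq j.+1) w.
Proof.
by rewrite /dotv !mxE; apply: eq_bigr => a _; rewrite !mxE.
Qed.

Lemma inQ_Q v : inQ k v -> exists y, v = lanczosQ k M b0 *m y.
Proof.
move=> [y ->]; exists (\col_(j < k) y j); rewrite Q_mul.
by apply: eq_bigr => j _; rewrite mxE.
Qed.

Lemma Q_inK x : inK k (lanczosQ k M b0 *m x).
Proof.
rewrite Q_mul; elim/big_ind: _ => //; [exact: inK0 | exact: inKD |].
move=> j _; apply: inKZ; apply: (inK_le (ltn_ord j)); apply: qq_inK; exact: ltn_ord.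
Qed.

Lemma QTQ : (lanczosQ k M b0)^T *m lanczosQ k M b0 = 1%:M.
Proof.
apply/matrixP => i j.
have -> : ((lanczosQ k M b0)^T *m lanczosQ k M b0) i j = dotv (qq i.+1) (qq j.+1).
  by rewrite dotvE !mxE; apply: eq_bigr => a _; rewrite !mxE.
rewrite (ortho hM hb0 hk (leqnn k)) ?ltn_ord // /delta mxE eqSS andbT.
by [].
Qed.

Lemma b0_qq1 : b0 = vnorm b0 *: qq 1.
Proof.
have bp := vnorm_gt0 hb0.
by rewrite qq1 scalerA mulfV ?gt_eqF // scale1r.
Qed.

Lemma QTb0 : (lanczosQ k M b0)^T *m b0 = vnorm b0 *: e1 R k.
Proof.
apply/matrixP => j z; rewrite ord1 QT_mul.
have hk0 : (1 <= k)%N by case: j => [jj hj]; apply: leq_ltn_trans hj.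
have -> : dotv (qq j.+1) b0 = vnorm b0 * dotv (qq j.+1) (qq 1) by rewrite -dotvZr -b0_qq1.
rewrite (ortho hM hb0 hk (leqnn k)) ?ltn_ord //.
by rewrite /delta !mxE eqSS andbT; case: (val j == 0%N).
Qed.

End Lz3.
Theorem theorem4p1 (R : realType) (n m : nat)
  (A : 'M[R]_n) (C : 'M[R]_(n, m)) (b : 'cV[R]_m)
  (hA : A^T = A) (hmn : (m < n)%N) (hC : \rank C = m)
  (hn0 : vnorm (nzero C b) < 1)
  (hb0 : projP C *m A *m nzero C b != 0)
  (k : nat) (hk1 : (1 <= k)%N)
  (hk : le_kmax (projP C *m A *m projP C) (projP C *m A *m nzero C b) k)
  (mu : R) (x : 'cV[R]_k)
  (hmin : rLG_minimizer
            (lanczosT k (projP C *m A *m projP C) (projP C *m A *m nzero C b))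
            (vnorm (projP C *m A *m nzero C b))
            (Num.sqrt (1 - vnorm (nzero C b) ^+ 2)) mu x) :
  is_min_on
    (fun v : 'cV[R]_n =>
       krylov k (projP C *m A *m projP C) (projP C *m A *m nzero C b)
              (v - nzero C b)
       /\ vnorm v = 1)
    (hq A)
    (nzero C b + lanczosQ k (projP C *m A *m projP C) (projP C *m A *m nzero C b) *m x).
Proof.
have hP := projP_sym C.
have hPP := projP_idem hC.
have hPn := projP_n0 b hC.
move: hb0 hk hmin hPn hn0 hP hPP.
rewrite /lanczosT.
set P := projP C; set n0 := nzero C b.
set M := P *m A *m P; set b0 := P *m A *m n0.
set Q := lanczosQ k M b0.
move=> hb0 hk hmin hPn hn0 hP hPP.
have dM : M = P *m A *m P by [].
have db0 : b0 = P *m (A *m n0) by rewrite mulmxA.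
have dQ : Q = lanczosQ k M b0 by [].
clearbody Q b0 M n0 P.
have hMs : M^T = M by rewrite dM !(@trmx_mul R) hA hP mulmxA.
have PM : P *m M = M by rewrite dM !mulmxA hPP.
have Pb : P *m b0 = b0 by rewrite db0 !mulmxA hPP.
have PQ : P *m Q = Q.
  apply/matrixP => a j.
  have cQ : col j Q = qq M b0 j.+1 by apply/matrixP => a' z; rewrite dQ ord1 !mxE.
  have hc : col j (P *m Q) = col j Q.
    rewrite colE -mulmxA -colE cQ.
    apply: (inK_P PM Pb); apply: (@qq_inK _ _ M b0 k hk); exact: ltn_ord.
  by have := congr1 (fun v : 'cV[R]_n => v a 0) hc; rewrite !mxE.
have QTP : Q^T *m P = Q^T by rewrite -{1}hP -(@trmx_mul R) PQ.
have QTQ1 : Q^T *m Q = 1%:M.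
  rewrite dQ; exact (QTQ hMs hb0 hk).
have QTb : Q^T *m b0 = vnorm b0 *: e1 R k by rewrite dQ; exact (QTb0 hMs hb0 hk).
set beta := vnorm b0.
set g := beta *: e1 R k.
set T := Q^T *m M *m Q.
have hT : T^T = T.
  by rewrite /T !(@trmx_mul R) hMs (@trmxK R) !mulmxA.
have QTAn0 : Q^T *m (A *m n0) = g.
  by rewrite /g /beta -QTb db0 [RHS]mulmxA QTP.
have QTAQ : Q^T *m A *m Q = T by rewrite /T dM !mulmxA QTP -(mulmxA _ P Q) PQ.
have QTn0 : Q^T *m n0 = 0 by rewrite -QTP -mulmxA hPn mulmx0.
have E1 : forall y, dotv (n0 + Q *m y) (n0 + Q *m y) = dotv n0 n0 + dotv y y.
  move=> y; rewrite !(dotvDl, dotvDr) (dotvC n0 (Q *m y)) !dotv_mulT QTn0 dotv0r.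
  by rewrite mulmxA QTQ1 mul1mx add0r addr0.
have E2 : forall y, hq A (n0 + Q *m y) = hq A n0 + qf T g y.
  move=> y.
  have s1 : dotv n0 (A *m (Q *m y)) = dotv g y.
    by rewrite (dotv_sym _ _ hA) dotvC dotv_mulT QTAn0 dotvC.
  have s2 : Q^T *m (A *m (Q *m y)) = T *m y by rewrite !mulmxA QTAQ.
  rewrite /hq -!mulmxA -/(dotv _ _) -/(dotv _ _) /qf.
  rewrite mulmxDr !(dotvDl, dotvDr) s1 !dotv_mulT QTAn0 s2 (dotvC y g); lra.
set gam := Num.sqrt (1 - vnorm n0 ^+ 2).
have vn0 := vnorm_ge0 n0.
have g1 : 0 < 1 - vnorm n0 ^+ 2.
  rewrite subr_gt0; have : vnorm n0 * vnorm n0 < 1 * 1.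
    by apply: ltr_pM => //.
  by rewrite expr2 mul1r.
have gp : 0 < gam by rewrite /gam sqrtr_gt0.
have gam2 : gam ^+ 2 = 1 - dotv n0 n0 by rewrite /gam sqr_sqrtr ?ltW // vnorm_sq.
have conv1 : forall lam (y : 'cV[R]_k), (T - lam%:M) *m y = T *m y - lam *: y.
  by move=> lam y; rewrite mulmxBl mul_scalar_mx.
have conv2 : forall (y : 'cV[R]_k), vnorm y = gam -> dotv y y = gam ^+ 2.
  by move=> y hy; rewrite -vnorm_sq hy.
have conv3 : forall (y : 'cV[R]_k), dotv y y = gam ^+ 2 -> vnorm y = gam.
  by move=> y hy; rewrite vnorm_dot hy sqrtr_sqr ger0_norm // ltW.
case: hmin => [[hx1 hx2] hmin].
have hxT : T *m x - mu *: x = - g by rewrite -conv1.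
have nx := conv2 _ hx2.
split.
  split.
    rewrite (addrC n0) addrK dQ; apply: inK_krylov; exact: Q_inK hk x.
  by rewrite vnorm_dot E1 nx gam2 addrC subrK sqrtr1.
move=> v [hv nv].
have [y hy] := inQ_Q (krylov_inQ hb0 hk hv); rewrite -dQ in hy.
have ev : v = n0 + Q *m y by rewrite -hy addrC subrK.
have ny : dotv y y = gam ^+ 2.
  by have := vnorm_sq v; rewrite nv expr1n ev E1 gam2 => h; lra.
rewrite ev.
rewrite !E2 lerD2l.
apply: (trs hT gp hxT nx) => // lam y' hy1 hy2.
apply: (hmin lam y'); split; first by rewrite conv1 hy1.
exact: conv3.
Qed.
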